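(* Consider the system of ordinary differential equations for $(T,I,V,A)$: \[ \frac{dT}{dt}=\Lambda-\mu T-\beta_0 VT,\qquad \frac{dI}{dt}=\beta_0 VT-\delta I,\qquad \frac{dV}{dt}=\omega I-cV-bAV,\qquad \frac{dA}{dt}=aVA-\sigma A, \] where all parameters $\Lambda,\mu,\beta_0,\delta,\omega,c,b,a,\sigma$ are strictly positive. Let $R_0=\frac{\beta_0\omega\Lambda}{c\delta\mu}$, $V^{is}=(R_0-1)\frac{\mu}{\beta_0}$ and $V^t=\frac{\sigma}{a}$. Assume that $\delta>\mu$ and that $(R_0-1)\frac{\mu}{\beta_0}>\frac{\sigma}{a}$ (i.e. $V^{is}>V^t$). Then this system has exactly one stable equilibrium, namely \[ T=\frac{\Lambda}{\mu+\beta_0V^t},\quad I=\frac{\beta_0\Lambda V^t}{\delta(\mu+\beta_0V^t)},\quad V=V^t,\quad A=\frac{c\,\beta_0\,(V^{is}-V^t)}{b(\mu+\beta_0V^t)}. \]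
   Context: An equilibrium is a point where all four right-hand sides vanish. ''Stable'' means (linearly, locally asymptotically) stable: all eigenvalues of the Jacobian matrix of the vector field at the equilibrium have strictly negative real parts. The other equilibria of the system are the trivial equilibrium $T=\Lambda/\mu$, $I=V=A=0$ and the ''immunosuppression'' equilibrium with $A=0$; these are not stable under the stated assumptions. *)

(* Defs.v *)
From HB Require Import structures.
From mathcomp Require Import all_boot all_order all_algebra.
From mathcomp Require Import reals.
From mathcomp Require Import complex.
Set Implicit Arguments. Unset Strict Implicit. Unset Printing Implicit Defensive.
Import Order.TTheory GRing.Theory Num.Theory.
Local Open Scope ring_scope.

Section HIV.
Variable R : realType.
Variables (Lam mu beta0 delta omega c b a sigma : R).

Definition fT (T I V A : R) : R := Lam - mu * T - beta0 * V * T.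
Definition fI (T I V A : R) : R := beta0 * V * T - delta * I.
Definition fV (T I V A : R) : R := omega * I - c * V - b * A * V.
Definition fA (T I V A : R) : R := a * V * A - sigma * A.

Definition is_equilibrium (T I V A : R) : Prop :=
  [/\ fT T I V A = 0, fI T I V A = 0, fV T I V A = 0 & fA T I V A = 0].

Definition jacobian (T I V A : R) : 'M[R]_4 :=
  \matrix_(i < 4, j < 4)
    nth 0 (nth [::]
      [:: [:: - mu - beta0 * V; 0; - beta0 * T; 0];
          [:: beta0 * V; - delta; beta0 * T; 0];
          [:: 0; omega; - c - b * A; - b * V];
          [:: 0; 0; a * A; a * V - sigma]] i) j.

(* linear (local asymptotic) stability: every complex eigenvalue of the
   Jacobian has strictly negative real part *)
Definition is_stable (T I V A : R) : Prop :=
  forall z : R[i],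
    eigenvalue (map_mx (fun x : R => x%:C%C) (jacobian T I V A)) z ->
    Re z < 0.
End HIV.

(* Main.v *)
Require Import Defs.
From HB Require Import structures.
From mathcomp Require Import all_boot all_order all_algebra.
From mathcomp Require Import reals.
From mathcomp Require Import complex.
From mathcomp Require Import ring lra.
Import Order.TTheory GRing.Theory Num.Theory.
Local Open Scope ring_scope.
Local Open Scope complex_scope.

Section K.
Variable R : realType.
Local Notation cRe := (@complex.Re R).
Local Notation cIm := (@complex.Im R).

Lemma ReM' (u v : R[i]) : cRe (u * v) = cRe u * cRe v - cIm u * cIm v.
Proof. by case: u => a b; case: v => c d. Qed.
Lemma ImM' (u v : R[i]) : cIm (u * v) = cRe u * cIm v + cIm u * cRe v.
Proof. by case: u => a b; case: v => c d. Qed.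
Lemma ReD' (u v : R[i]) : cRe (u + v) = cRe u + cRe v.
Proof. by case: u => a b; case: v => c d. Qed.
Lemma ImD' (u v : R[i]) : cIm (u + v) = cIm u + cIm v.
Proof. by case: u => a b; case: v => c d. Qed.
Lemma ReB' (u v : R[i]) : cRe (u - v) = cRe u - cRe v.
Proof. by case: u => a b; case: v => c d. Qed.
Lemma ImB' (u v : R[i]) : cIm (u - v) = cIm u - cIm v.
Proof. by case: u => a b; case: v => c d. Qed.
Lemma ReC' (k : R) : cRe (k%:C)%C = k. Proof. by []. Qed.
Lemma ImC' (k : R) : cIm (k%:C)%C = 0. Proof. by []. Qed.

Definition nsq (u : R[i]) := cRe u ^+ 2 + cIm u ^+ 2.
Lemma nsqM u v : nsq (u * v) = nsq u * nsq v.
Proof. rewrite /nsq ReM' ImM'; ring. Qed.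

Lemma key (p d g h mu : R) (z : R[i]) : 0 < mu -> mu < p -> 0 < d -> 0 < g -> 0 < h ->
  0 <= cRe z ->
  (z + p%:C)*(z + d%:C)*(z*z + g%:C*z + h%:C) - (d*g)%:C*z*(z + mu%:C) != 0.
Proof.
move=> mu0 mup d0 g0 h0 x0.
apply/eqP => /eqP; rewrite subr_eq0 => /eqP /(congr1 nsq).
rewrite !nsqM /nsq ?(ReM', ImM', ReD', ImD', ReB', ImB', ReC', ImC').
move: x0; case: z => x y /= x0.
set N := x^+2 + y^+2.
set Qr := x*x - y*y + g*x + h.
set Qi := x*y + y*x + g*y.
have -> : (x * x - y * y + (g * x - 0 * y) + h) = Qr by rewrite /Qr; ring.
have -> : (x * y + y * x + (g * y + 0 * x) + 0) = Qi by rewrite /Qi; ring.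
have HN : N * (Qr^+2 + Qi^+2) - g^+2 * N^+2 = ((x+g)*N + h*x)^+2 - g^+2*N^+2 + y^+2*(N-h)^+2.
  rewrite /N /Qr /Qi; ring.
rewrite !addr0 expr0n /= addr0.
set A1 := (x + p) ^+ 2 + y ^+ 2; set A0 := (x + mu) ^+ 2 + y ^+ 2.
set B := (x + d) ^+ 2 + y ^+ 2; set Qn := Qr ^+ 2 + Qi ^+ 2 => EQ.
have N0 : 0 <= N by rewrite /N; nra.
have A0p : 0 < A0 by rewrite /A0; nra.
have A10 : A0 < A1 by rewrite /A0 /A1; nra.
have Bd : d ^+ 2 <= B by rewrite /B; nra.
have Qn0 : 0 <= Qn by rewrite /Qn; nra.
case: (ltrgt0P N) => [Np||N0'].
- have t1 : g * N <= (x + g) * N + h * x by nra.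
  have gN0 : 0 <= g * N by apply: mulr_ge0; lra.
  have t2 : (g*N)^+2 <= ((x + g) * N + h * x)^+2.
    by rewrite -subr_ge0 subr_sqr; apply: mulr_ge0; lra.
  have t3 : g^+2 * N <= Qn.
    have : 0 <= N * (Qn - g^+2 * N).
      have -> : N * (Qn - g^+2 * N) = N * Qn - g^+2 * N^+2 by ring.
      rewrite HN; have e : (g*N)^+2 = g^+2*N^+2 by ring.
      have : 0 <= y ^+ 2 * (N - h) ^+ 2 by apply: mulr_ge0; apply: sqr_ge0.
      lra.
    rewrite pmulr_rge0 // subr_ge0 //.
  have t4 : A1 * B * Qn >= A1 * d^+2 * (g^+2 * N).
    have A1p : 0 <= A1 by lra.
    apply: ler_pM => //.
    - by apply: mulr_ge0 => //; apply: sqr_ge0.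
    - by apply: mulr_ge0; [apply: sqr_ge0|lra].
    - by apply: ler_pM => //; apply: sqr_ge0.
  have t5 : A1 * d^+2 * (g^+2 * N) > A0 * d^+2 * (g^+2 * N).
    by rewrite ltr_pM2r ?ltr_pM2r //; apply: mulr_gt0 => //; apply: exprn_gt0.
  nra.
- by move=> /lt_geF; rewrite N0.
- have x00 : x = 0 by rewrite /N in N0'; nra.
  have y00 : y = 0 by rewrite /N in N0'; nra.
  move: EQ; rewrite N0' mulr0 mul0r /A1 /B /Qn /Qr /Qi x00 y00.
  move=> E; have : 0 < (p^+2 + 0^+2) * (d^+2 + 0^+2) * ((0*0-0*0+g*0+h)^+2 + (0*0+0*0+g*0)^+2).
    rewrite !(mulr0, mul0r, addr0, add0r, subr0, expr0n) /=; apply: mulr_gt0; [apply: mulr_gt0|]; apply: exprn_gt0 => //; lra.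
  by rewrite !add0r in E; rewrite E ltxx.
Qed.

Lemma Cneq0 (x : R) : x != 0 -> x%:C != 0 :> R[i].
Proof. by move=> hx; apply/eqP => [[]]; apply/eqP. Qed.

Lemma CD (x y : R) : (x + y)%:C = x%:C + y%:C :> R[i]. Proof. exact: rmorphD. Qed.
Lemma CB (x y : R) : (x - y)%:C = x%:C - y%:C :> R[i]. Proof. exact: rmorphB. Qed.
Lemma CN (x : R) : (- x)%:C = - x%:C :> R[i]. Proof. exact: rmorphN. Qed.
Lemma CM (x y : R) : (x * y)%:C = x%:C * y%:C :> R[i]. Proof. exact: rmorphM. Qed.
Lemma C0 : (0 : R)%:C = 0 :> R[i]. Proof. by []. Qed.

Lemma sub0 (x y : R[i]) : x = y -> x - y = 0.
Proof. by move=> ->; rewrite subrr. Qed.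

Lemma stab_int (Lam mu beta0 delta omega c b a sigma T I V A : R) :
  0 < mu -> 0 < beta0 -> 0 < delta -> 0 < omega -> 0 < c -> 0 < b -> 0 < a ->
  0 < T -> 0 < V -> 0 < A -> a * V - sigma = 0 ->
  omega * (beta0 * T) = delta * (c + b * A) ->
  is_stable mu beta0 delta omega c b a sigma T I V A.
Proof.
move=> mu0 be0 de0 om0 c0 b0 a0 T0 V0 A0 eqV eqK z /eigenvalueP [v Hv vnz].
have e0 := congr1 (fun M : 'M[R[i]]_(1,4) => M ord0 ord0) Hv.
have e1 := congr1 (fun M : 'M[R[i]]_(1,4) => M ord0 (lift ord0 ord0)) Hv.
have e2 := congr1 (fun M : 'M[R[i]]_(1,4) => M ord0 (lift ord0 (lift ord0 ord0))) Hv.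
have e3 := congr1 (fun M : 'M[R[i]]_(1,4) => M ord0 (lift ord0 (lift ord0 (lift ord0 ord0)))) Hv.
rewrite /= !mxE !big_ord_recl !big_ord0 /= !mxE /= in e0 e1 e2 e3.
rewrite eqV in e3.
have eK' := congr1 (real_complex R) eqK.
rewrite ?(CB, CN, CM, CD, C0) in e0 e1 e2 e3 eK'.
set v0 := v ord0 ord0 in e0 e1 e2 e3.
set v1 := v ord0 (lift ord0 ord0) in e0 e1 e2 e3.
set v2 := v ord0 (lift ord0 (lift ord0 ord0)) in e0 e1 e2 e3.
set v3 := v ord0 (lift ord0 (lift ord0 (lift ord0 ord0))) in e0 e1 e2 e3.
set m := mu%:C in e0 e1 e2 e3 eK'.
set be := beta0%:C in e0 e1 e2 e3 eK'.
set de := delta%:C in e0 e1 e2 e3 eK'.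
set om := omega%:C in e0 e1 e2 e3 eK'.
set cc := c%:C in e0 e1 e2 e3 eK'.
set bb := b%:C in e0 e1 e2 e3 eK'.
set aa := a%:C in e0 e1 e2 e3 eK'.
set TT := T%:C in e0 e1 e2 e3 eK'.
set VV := V%:C in e0 e1 e2 e3 eK'.
set AA := A%:C in e0 e1 e2 e3 eK'.
have h0 : v1*(be*VV) - (z + (m + be*VV))*v0 = 0 by rewrite -(sub0 _ _ e0); ring.
have h1 : om*v2 - (z+de)*v1 = 0 by rewrite -(sub0 _ _ e1); ring.
have h2 : be*TT*(v1 - v0) + aa*AA*v3 - (z + (cc + bb*AA))*v2 = 0 by rewrite -(sub0 _ _ e2); ring.
have h3 : -(bb*VV)*v2 - z*v3 = 0 by rewrite -(sub0 _ _ e3); ring.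
have hK : om*(be*TT) - de*(cc+bb*AA) = 0 by rewrite -(sub0 _ _ eK'); ring.
set Q := z*z + (cc+bb*AA)*z + aa*AA*bb*VV.
have HP : v0 * ((z+(m+be*VV))*(z+de)*Q - de*(cc+bb*AA)*z*(z+m)) = 0.
  have -> : v0 * ((z+(m+be*VV))*(z+de)*Q - de*(cc+bb*AA)*z*(z+m)) =
    -(om*(be*VV)*(z*(be*TT*(v1 - v0) + aa*AA*v3 - (z + (cc + bb*AA))*v2) + aa*AA*(-(bb*VV)*v2 - z*v3))
      - (v1*(be*VV) - (z + (m + be*VV))*v0)*(om*z*(be*TT) - Q*(z+de))
      + Q*(be*VV)*(om*v2 - (z+de)*v1) - (om*(be*TT) - de*(cc+bb*AA))*z*(z+m)*v0).
    rewrite /Q; ring.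
  by rewrite h0 h1 h2 h3 hK; ring.
rewrite -complexRe -[0]/(0%:C) ltcR ltNge; apply/negP => x0.
move/eqP: HP; rewrite mulf_eq0 => /orP [/eqP v00 | /eqP P0].
- have cbV : be * VV != 0 by rewrite /be /VV -CM; apply: Cneq0; apply: lt0r_neq0; apply: mulr_gt0.
  have v10 : v1 = 0.
    by move: h0; rewrite v00 mulr0 subr0 => /eqP; rewrite mulf_eq0 (negbTE cbV) orbF => /eqP.
  have v20 : v2 = 0.
    move: h1; rewrite v10 mulr0 subr0 => /eqP; rewrite mulf_eq0 => /orP [|/eqP //].
    by rewrite /om (negbTE (Cneq0 _ (lt0r_neq0 om0))).
  have v30 : v3 = 0.
    move: h2; rewrite v10 v00 v20 !mulr0 subrr mulr0 add0r subr0 => /eqP.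
    rewrite mulf_eq0 => /orP [|/eqP //].
    by rewrite /aa /AA -CM (negbTE (Cneq0 _ (lt0r_neq0 (mulr_gt0 a0 A0)))).
  move/negP: vnz; apply; apply/eqP/rowP => j; rewrite !mxE.
  case: j => [[|[|[|[|j]]]] Hj] //.
  + by rewrite -v00 /v0; congr (v _ _); apply: val_inj.
  + by rewrite -v10 /v1; congr (v _ _); apply: val_inj.
  + by rewrite -v20 /v2; congr (v _ _); apply: val_inj.
  + by rewrite -v30 /v3; congr (v _ _); apply: val_inj.
- have := key (mu + beta0 * V) delta (c + b * A) (a*A*b*V) mu z mu0.
  have H1 : mu < mu + beta0 * V by rewrite ltrDl; apply: mulr_gt0.
  have H2 : 0 < c + b * A by apply: addr_gt0 => //; apply: mulr_gt0.
  have H3 : 0 < a * A * b * V by do !apply: mulr_gt0.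
  move=> /(_ H1 de0 H2 H3 x0) /negP; apply; apply/eqP.
  move: P0; rewrite /Q /m /be /de /cc /bb /aa /VV /AA => P0.
  rewrite !(CD, CM); rewrite -[RHS]P0; ring.
Qed.

Lemma unst_gen (mu beta0 delta omega c b a sigma T I V A k : R) (u : 'rV[R]_4) :
  u != 0 -> u *m jacobian mu beta0 delta omega c b a sigma T I V A = k *: u ->
  0 <= k -> ~ is_stable mu beta0 delta omega c b a sigma T I V A.
Proof.
move=> unz Hu k0 st.
have E : eigenvalue (map_mx (real_complex R) (jacobian mu beta0 delta omega c b a sigma T I V A)) (k%:C).
  rewrite eigenvalue_map; apply/eigenvalueP; by exists u.
have := st _ E; rewrite -complexRe -[0]/(0%:C) ltcR /=.
by rewrite ltNge k0.
Qed.

Lemma row4E (u0 u1 u2 u3 : R) (M : 'M[R]_4) :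
  (\row_(j < 4) nth 0 [:: u0; u1; u2; u3] j) *m M =
  \row_(j < 4) (u0 * M ord0 j + u1 * M (lift ord0 ord0) j + u2 * M (lift ord0 (lift ord0 ord0)) j
     + u3 * M (lift ord0 (lift ord0 (lift ord0 ord0))) j).
Proof.
apply/rowP => j; rewrite !mxE !big_ord_recl big_ord0 !mxE /=; ring.
Qed.

Lemma unstA (mu beta0 delta omega c b a sigma T I V : R) :
  0 < a * V - sigma -> ~ is_stable mu beta0 delta omega c b a sigma T I V 0.
Proof.
move=> h; apply: (@unst_gen _ _ _ _ _ _ _ _ _ _ _ _ (a * V - sigma) (\row_(j < 4) nth 0 [:: 0; 0; 0; 1] j)).
- apply/negP => /eqP/rowP/(_ ord_max); rewrite !mxE /=; apply/eqP; exact: oner_neq0.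
- rewrite row4E; apply/rowP => j; rewrite !mxE; case: j => [[|[|[|[|j]]]] Hj] //=; rewrite /jacobian ?mxE /=; ring.
- exact: ltW.
Qed.

Lemma unstT (mu beta0 delta omega c b a sigma T I : R) :
  0 < delta -> 0 < omega -> 0 < c ->
  delta * c < omega * (beta0 * T) -> ~ is_stable mu beta0 delta omega c b a sigma T I 0 0.
Proof.
move=> d0 w0 c0 h.
set D := (delta - c)^+2 + 4 * (omega * (beta0 * T)).
have D0 : 0 <= D by rewrite /D; nra.
set s := Num.sqrt D.
have s0 : 0 <= s by apply: sqrtr_ge0.
have s2 : s ^+ 2 = D by rewrite /s sqr_sqrtr.
set l := (s - (delta + c)) / 2.
have l0 : 0 <= l.
  rewrite /l; apply: divr_ge0; last lra.
  rewrite subr_ge0; rewrite /D in s2; nra.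
have ql : (l + c) * (l + delta) = omega * (beta0 * T).
  rewrite /l; have : s^+2 = D by []; rewrite /D => s2'; nra.
apply: (@unst_gen _ _ _ _ _ _ _ _ _ _ _ _ l (\row_(j < 4) nth 0 [:: 0; omega; l + delta; 0] j)).
- apply/negP => /eqP/rowP/(_ (lift ord0 ord0)); rewrite !mxE /=; apply/eqP; lra.
- rewrite row4E; apply/rowP => j; rewrite !mxE; case: j => [[|[|[|[|j]]]] Hj] //=; rewrite /jacobian ?mxE /=; nra.
- exact: l0.
Qed.
End K.
Lemma eq_div (R : realType) (x y z : R) : z != 0 -> x * z = y -> x = y / z.
Proof. by move=> nz h; rewrite -h mulfK. Qed.

Local Close Scope complex_scope.

Theorem proposition1 (R : realType) (Lam mu beta0 delta omega c b a sigma : R) :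
  0 < Lam -> 0 < mu -> 0 < beta0 -> 0 < delta -> 0 < omega ->
  0 < c -> 0 < b -> 0 < a -> 0 < sigma ->
  let R0 := beta0 * omega * Lam / (c * delta * mu) in
  let Vis := (R0 - 1) * mu / beta0 in
  let Vt := sigma / a in
  delta > mu -> Vis > Vt ->
  forall T I V A : R,
    (is_equilibrium Lam mu beta0 delta omega c b a sigma T I V A /\
     is_stable mu beta0 delta omega c b a sigma T I V A) <->
    [/\ T = Lam / (mu + beta0 * Vt),
        I = beta0 * Lam * Vt / (delta * (mu + beta0 * Vt)),
        V = Vt &
        A = c * beta0 * (Vis - Vt) / (b * (mu + beta0 * Vt))].
Proof.
move=> L0 mu0 be0 de0 om0 c0 b0 a0 s0 R0 Vis Vt hdm hV T I V A.
have Vt0 : 0 < Vt by rewrite /Vt divr_gt0.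
have Dp : 0 < mu + beta0 * Vt by apply: addr_gt0 => //; apply: mulr_gt0.
have P1 : 0 < mu * a + beta0 * sigma by apply: addr_gt0; apply: mulr_gt0.
have hR0 : c * delta * mu < beta0 * omega * Lam.
  have : 0 < Vis by apply: lt_trans hV.
  rewrite /Vis /R0 pmulr_lgt0 ?invr_gt0 // pmulr_lgt0 // subr_gt0.
  by rewrite ltr_pdivlMr ?mul1r //; do !apply: mulr_gt0.
split.
- case=> [[eT eI eV eA] st].
  rewrite /fT /fI /fV /fA in eT eI eV eA.
  have : A * (a * V - sigma) = 0 by rewrite -eA; ring.
  move/eqP; rewrite mulf_eq0 => /orP [/eqP A0 | /eqP aV].
  + subst A.
    have [V0 | V0] := eqVneq V 0.
    * subst V. exfalso.
      rewrite !mulr0 !mul0r !subr0 in eT eI eV.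
      have eT' : T = Lam / mu by apply: eq_div; [exact: lt0r_neq0 | lra].
      apply: (@unstT R mu beta0 delta omega c b a sigma T I de0 om0 c0) => //.
      rewrite eT'.
      have -> : omega * (beta0 * (Lam / mu)) = (beta0 * omega * Lam) / mu by rewrite mulrA mulrA [omega * beta0]mulrC.
      rewrite ltr_pdivlMr //; by rewrite [delta * c]mulrC.
    * exfalso.
      have eK : omega * beta0 * T = delta * c.
        apply: (mulIf V0).
        have e1 : delta * I = beta0 * V * T by lra.
        have e2 : omega * I = c * V by lra.
        apply: (mulfI (lt0r_neq0 de0)).
        have -> : delta * (omega * beta0 * T * V) = omega * (beta0 * V * T) * delta by ring.
        rewrite -e1; have -> : omega * (delta * I) * delta = delta * (delta * (omega * I)) by ring.
        rewrite e2; ring.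
      have eL : Lam = T * (mu + beta0 * V) by lra.
      have eVis : Vis = V.
        rewrite /Vis /R0 eL.
        have eT2 : T = delta * c / (omega * beta0).
          by apply: eq_div; [rewrite mulf_neq0 ?lt0r_neq0 // | rewrite -eK; ring].
        rewrite eT2; field.
        by rewrite !lt0r_neq0.
      apply: (@unstA R mu beta0 delta omega c b a sigma T I V).
        rewrite subr_gt0 -ltr_pdivrMl // mulrC -/Vt -eVis //.
      exact: st.
  + have eVt : V = Vt by rewrite /Vt; apply: eq_div; [exact: lt0r_neq0 | rewrite mulrC; lra].
    subst V.
    have eT' : T = Lam / (mu + beta0 * Vt).
      by apply: eq_div; [exact: lt0r_neq0 | lra].
    have eI' : I = beta0 * Lam * Vt / (delta * (mu + beta0 * Vt)).
      apply: eq_div; first by rewrite mulf_neq0 ?lt0r_neq0.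
      have -> : I * (delta * (mu + beta0 * Vt)) = (delta * I) * (mu + beta0 * Vt) by ring.
      have -> : delta * I = beta0 * Vt * T by lra.
      rewrite eT'; field; by rewrite !lt0r_neq0.
    split => //.
    apply: eq_div; first by rewrite mulf_neq0 ?lt0r_neq0.
    apply: (mulIf (lt0r_neq0 Vt0)).
    have -> : A * (b * (mu + beta0 * Vt)) * Vt = (b * A * Vt) * (mu + beta0 * Vt) by ring.
    have -> : b * A * Vt = omega * I - c * Vt by lra.
    rewrite eI' /Vis /R0 /Vt; field.
    by rewrite !lt0r_neq0.
- case=> -> -> -> ->.
  have Ap : 0 < c * beta0 * (Vis - Vt) / (b * (mu + beta0 * Vt)).
    by apply: divr_gt0; [apply: mulr_gt0; [apply: mulr_gt0|rewrite subr_gt0] | apply: mulr_gt0].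
  split.
  + rewrite /is_equilibrium /fT /fI /fV /fA; split.
    * field; by rewrite !lt0r_neq0.
    * field; by rewrite !lt0r_neq0.
    * rewrite /Vis /R0 /Vt; field.
      by rewrite !lt0r_neq0.
    * rewrite /Vt; field; by rewrite !lt0r_neq0.
  + apply: (@stab_int R Lam) => //.
    * by apply: divr_gt0.
    * rewrite /Vt; field; by rewrite !lt0r_neq0.
    * rewrite /Vis /R0 /Vt; field.
      by rewrite !lt0r_neq0.
Qed.
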